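(* Let $\Gamma\subset k^{t\times t}$ be a basic matrix algebra, let $\mathcal D$ be the set of diagonal matrices in $\Gamma$ and $\mathcal R$ the set of matrices in $\Gamma$ with zero diagonal. (a) There exists a basis $E_1,\dots,E_r$ of $\mathcal D$ over $k$ consisting of matrices all of whose entries are $0$ and $1$, such that $E_1+\dots+E_r=I_t$, $E_\alpha E_\beta=0$ for $\alpha\ne\beta$, and $E_\alpha^2=E_\alpha$; consequently, as vector spaces, $\Gamma=\mathcal D\oplus\mathcal R=\bigl(\bigoplus_{\alpha=1}^r kE_\alpha\bigr)\oplus\bigl(\bigoplus_{\alpha,\beta=1}^r E_\alpha\mathcal R E_\beta\bigr)$. (b) The set of basic $t\times t$ algebras coincides with the set of reduced $\underline 1\times\underline 1$ algebras, where $\underline 1=(1,\dots,1)$. Namely, a basic $t\times t$ algebra $\Gamma$ is the reduced $\underline 1\times\underline 1$ algebra given by the equivalence relation on $\{1,\dots,t\}$ whose classes are $\mathcal I_1,\dots,\mathcal I_r$, where $E_\alpha=\sum_{i\in\mathcal I_\alpha}e_{ii}$, and by a family of systems of linear equations such that, for all $\alpha,\beta$, the solutions of the $(\mathcal I_\alpha,\mathcal I_\beta)$ system form the space $E_\alpha\mathcal R E_\beta$.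
   Context: $k$ is an algebraically closed field; $e_{ij}$ is the matrix unit. A basic matrix algebra is a subalgebra $\Gamma\subset k^{t\times t}$ (containing $I_t$) consisting of upper triangular matrices such that for every $[a_{ij}]\in\Gamma$ the diagonal matrix $\mathrm{diag}(a_{11},\dots,a_{tt})$ also lies in $\Gamma$. A reduced $\underline 1\times\underline 1$ algebra is an algebra $\Lambda\subset k^{t\times t}$ for which there are an equivalence relation $\sim$ on $\{1,\dots,t\}$ and, for each pair $(\mathcal I,\mathcal J)$ of classes, a finite system of linear equations $\sum_{\mathcal I\ni i<j\in\mathcal J}c^{(l)}_{ij}x_{ij}=0$, such that $\Lambda$ consists exactly of all upper triangular matrices $[s_{ij}]$ with $s_{ii}=s_{jj}$ whenever $i\sim j$ and whose entries satisfy all these systems. *)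

(* Defs.v *)
From HB Require Import structures.
From mathcomp Require Import all_boot all_order all_algebra.
Set Implicit Arguments. Unset Strict Implicit. Unset Printing Implicit Defensive.
Import Order.TTheory GRing.Theory.
Local Open Scope ring_scope.

Definition is_subalgebra (k : fieldType) (t : nat) (G : 'M[k]_t -> Prop) : Prop :=
  [/\ G 1%:M, G 0,
      (forall A B, G A -> G B -> G (A + B)),
      (forall (a : k) A, G A -> G (a *: A)) &
      (forall A B, G A -> G B -> G (A *m B))].

Definition upper_tri (k : fieldType) (t : nat) (A : 'M[k]_t) : Prop :=
  forall i j : 'I_t, (j < i)%N -> A i j = 0.

Definition diagonal (k : fieldType) (t : nat) (A : 'M[k]_t) : Prop :=
  forall i j : 'I_t, i != j -> A i j = 0.

Definition diag_part (k : fieldType) (t : nat) (A : 'M[k]_t) : 'M[k]_t :=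
  \matrix_(i, j) (if i == j then A i j else 0).

Definition basic_alg (k : fieldType) (t : nat) (G : 'M[k]_t -> Prop) : Prop :=
  [/\ is_subalgebra G,
      (forall A, G A -> upper_tri A) &
      (forall A, G A -> G (diag_part A))].

Definition diagD (k : fieldType) (t : nat) (G : 'M[k]_t -> Prop) (A : 'M[k]_t) :=
  G A /\ diagonal A.
Definition radR (k : fieldType) (t : nat) (G : 'M[k]_t -> Prop) (A : 'M[k]_t) :=
  G A /\ forall i : 'I_t, A i i = 0.

Definition is_equiv_rel (t : nat) (e : rel 'I_t) : Prop :=
  [/\ (forall i, e i i), (forall i j, e i j -> e j i) &
      (forall i j l, e i j -> e j l -> e i l)].
Definition eclass (t : nat) (e : rel 'I_t) (i : 'I_t) : {set 'I_t} :=
  [set j | e i j].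

(* the system of linear equations attached to the pair of classes (I, J):
   each equation is given by its coefficient matrix c, and reads
   sum_{I \ni i < j \in J} c_ij x_ij = 0 *)
Definition sys_holds (k : fieldType) (t : nat) (sysIJ : seq 'M[k]_t)
    (I J : {set 'I_t}) (S : 'M[k]_t) : Prop :=
  forall c, c \in sysIJ ->
    \sum_(i in I) \sum_(j in J | (i < j)%N) c i j * S i j = 0.

Definition reduced_by (k : fieldType) (t : nat) (e : rel 'I_t)
    (sys : {set 'I_t} -> {set 'I_t} -> seq 'M[k]_t) (S : 'M[k]_t) : Prop :=
  [/\ upper_tri S,
      (forall i j, e i j -> S i i = S j j) &
      (forall i j, sys_holds (sys (eclass e i) (eclass e j))
                              (eclass e i) (eclass e j) S)].

Definition reduced_alg (k : fieldType) (t : nat) (G : 'M[k]_t -> Prop) : Prop :=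
  is_subalgebra G /\
  exists (e : rel 'I_t) (sys : {set 'I_t} -> {set 'I_t} -> seq 'M[k]_t),
    is_equiv_rel e /\ forall S, G S <-> reduced_by e sys S.

Definition good_basis (k : fieldType) (t r : nat) (G : 'M[k]_t -> Prop)
    (E : 'I_r -> 'M[k]_t) : Prop :=
  [/\ (forall a, diagD G (E a)),
      (forall (c : 'I_r -> k), \sum_a c a *: E a = 0 -> forall a, c a = 0),
      (forall A, diagD G A -> exists c : 'I_r -> k, A = \sum_a c a *: E a),
      (forall a i j, E a i j = 0 \/ E a i j = 1) &
      [/\ \sum_a E a = 1%:M,
          (forall a b, a != b -> E a *m E b = 0) &
          (forall a, E a *m E a = E a)]].

Definition ERE (k : fieldType) (t r : nat) (G : 'M[k]_t -> Prop)
    (E : 'I_r -> 'M[k]_t) (a b : 'I_r) (Y : 'M[k]_t) : Prop :=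
  exists X, radR G X /\ Y = E a *m X *m E b.

Definition direct_decomp (k : fieldType) (t r : nat) (G : 'M[k]_t -> Prop)
    (E : 'I_r -> 'M[k]_t) : Prop :=
  [/\ (forall A, G A -> exists D0 R0, [/\ diagD G D0, radR G R0 & A = D0 + R0]),
      (forall D0 R0, diagD G D0 -> radR G R0 -> D0 + R0 = 0 -> D0 = 0 /\ R0 = 0),
      (forall a b Y, ERE G E a b Y -> radR G Y),
      (forall A, G A -> exists (c : 'I_r -> k) (Y : 'I_r -> 'I_r -> 'M[k]_t),
          (forall a b, ERE G E a b (Y a b)) /\
          A = \sum_a c a *: E a + \sum_a \sum_b Y a b) &
      (forall (c : 'I_r -> k) (Y : 'I_r -> 'I_r -> 'M[k]_t),
          (forall a b, ERE G E a b (Y a b)) ->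
          \sum_a c a *: E a + \sum_a \sum_b Y a b = 0 ->
          (forall a, c a = 0) /\ (forall a b, Y a b = 0))].

Definition rel_of_basis (k : fieldType) (t r : nat) (E : 'I_r -> 'M[k]_t) : rel 'I_t :=
  fun i j => [exists a, (E a i i == 1) && (E a j j == 1)].
Definition class_of_basis (k : fieldType) (t r : nat) (E : 'I_r -> 'M[k]_t) (a : 'I_r)
  : {set 'I_t} := [set i | E a i i == 1].

(* Main.v *)
Require Import Defs.
From HB Require Import structures.
From mathcomp Require Import all_boot all_order all_algebra.
From Stdlib Require Import ClassicalEpsilon Classical.
Set Implicit Arguments. Unset Strict Implicit. Unset Printing Implicit Defensive.
Import GRing.Theory.
Local Open Scope ring_scope.

Section Gen.
Variables (k : fieldType) (t : nat).

Definition Ind (S : {set 'I_t}) : 'M[k]_t := \matrix_(i, j) ((i == j) && (i \in S))%:R.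
Arguments Ind : clear implicits.

Lemma Ind_delta S : Ind S = \sum_(i in S) delta_mx i i.
Proof.
apply/matrixP => p q; rewrite summxE !mxE.
case: (eqVneq p q) => [<-|npq] /=.
  case pS: (p \in S).
    rewrite (bigD1 p) //= mxE !eqxx big1 ?addr0 // => i /andP [_ ip].
    by rewrite mxE eq_sym (negbTE ip).
  by rewrite big1 // => i iS; rewrite mxE; case: (eqVneq p i) => // pi; rewrite pi iS in pS.
rewrite big1 // => i _; rewrite mxE.
by case: (eqVneq p i) => [pi|//]; rewrite -pi eq_sym (negbTE npq) andbF.
Qed.

Lemma mulIndl S (X : 'M[k]_t) p q : (Ind S *m X) p q = (p \in S)%:R * X p q.
Proof.
rewrite !mxE (bigD1 p) //= big1 ?addr0; first by rewrite mxE eqxx.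
by move=> l Hl; rewrite !mxE eq_sym (negbTE Hl) mul0r.
Qed.

Lemma mulIndr S (X : 'M[k]_t) p q : (X *m Ind S) p q = X p q * (q \in S)%:R.
Proof.
rewrite !mxE (bigD1 q) //= big1 ?addr0; first by rewrite mxE eqxx.
by move=> l Hl; rewrite !mxE (negbTE Hl) mulr0.
Qed.

Lemma mul_diagl (C A : 'M[k]_t) p q : diagonal C -> (C *m A) p q = C p p * A p q.
Proof.
move=> dC; rewrite !mxE (bigD1 p) //= big1 ?addr0 //.
by move=> l Hl; rewrite dC ?mul0r // eq_sym.
Qed.

Lemma dp_entry (A : 'M[k]_t) p q : diag_part A p q = if p == q then A p q else 0.
Proof. by rewrite mxE. Qed.

Lemma dp_diag (A : 'M[k]_t) : diagonal (diag_part A).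
Proof. by move=> p q /negbTE H; rewrite mxE H. Qed.

Lemma dp_id (A : 'M[k]_t) : diagonal A -> diag_part A = A.
Proof.
move=> dA; apply/matrixP => p q; rewrite mxE.
by case: (eqVneq p q) => [->|H] //; rewrite dA.
Qed.

Lemma natr_eq1 (b : bool) : ((b%:R : k) == 1) = b.
Proof. by case: b; rewrite ?eqxx // eq_sym oner_eq0. Qed.

Lemma block_sum (c X : 'M[k]_t) (I J : {set 'I_t}) :
  (forall i j, ~~ [&& i \in I, j \in J & (i < j)%N] -> X i j = 0) ->
  \sum_(i in I) \sum_(j in J | (i < j)%N) c i j * X i j =
  \sum_i \sum_j c i j * X i j.
Proof.
move=> HX; rewrite [LHS]big_mkcond /=; apply: eq_bigr => i _.
case iI: (i \in I).
  rewrite [LHS]big_mkcond /=; apply: eq_bigr => j _.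
  case: ifP => // H; rewrite HX ?mulr0 //; by rewrite iI H.
by rewrite big1 // => j _; rewrite HX ?mulr0 // iI.
Qed.

Lemma sys_ext cs (I J : {set 'I_t}) (X S : 'M[k]_t) :
  (forall p q, p \in I -> q \in J -> (p < q)%N -> X p q = S p q) ->
  sys_holds cs I J X -> sys_holds cs I J S.
Proof.
move=> E H c cin; rewrite -[RHS](H c cin); apply: eq_bigr => i iI.
by apply: eq_bigr => j /andP [jJ ij]; rewrite E.
Qed.

End Gen.
Arguments Ind {k t} S.
Section Eqns.
Variables (k : fieldType) (t : nat) (W : 'M[k]_t -> Prop).
Hypotheses (W0 : W 0) (WD : forall A B, W A -> W B -> W (A + B))
  (WZ : forall (a : k) A, W A -> W (a *: A)).

Lemma W_vspace : exists U : {vspace 'M[k]_t}, forall X, W X <-> X \in U.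
Proof.
have step : forall d, exists U : {vspace 'M[k]_t}, (forall v, v \in U -> W v) /\
    ((forall w, W w -> w \in U) \/ (d <= \dim U)%N).
  elim=> [|d [U [HU [HW|Hd]]]].
  - exists 0%VS; split; last by right.
    by move=> v; rewrite memv0 => /eqP ->.
  - by exists U; split => //; left.
  - case: (classic (forall w, W w -> w \in U)) => [HW|].
      by exists U; split => //; left.
    move=> /not_all_ex_not [w] Hw; have [Ww wU] := imply_to_and _ _ Hw.
    exists (U + <[w]>)%VS; split.
      move=> v /memv_addP [u uU [v' /vlineP [a ->] ->]].
      by apply: WD; [apply: HU | apply: WZ].
    right; apply: (leq_ltn_trans Hd).
    have H := dimv_leqif_eq (addvSl U <[w]>).
    rewrite (ltn_leqif H); apply/negP => /eqP E.
    apply: wU; rewrite E; have := memv_add (mem0v U) (memv_line w); by rewrite add0r.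
have [U [HU [HW|Hd]]] := step (\dim (fullv : {vspace 'M[k]_t})).+1.
  by exists U => X; split; [apply: HW | apply: HU].
by have := dimvS (subvf U); rewrite leqNgt Hd.
Qed.

Lemma W_eqns : exists cs : seq 'M[k]_t, forall X, W X <->
  (forall c, c \in cs -> \sum_i \sum_j c i j * X i j = 0).
Proof.
have [U HU] := W_vspace.
pose f := projv U.
pose c (pq : 'I_t * 'I_t) : 'M[k]_t :=
  \matrix_(i, j) ((delta_mx i j - f (delta_mx i j)) pq.1 pq.2).
have key : forall pq (X : 'M[k]_t), \sum_i \sum_j c pq i j * X i j = (X - f X) pq.1 pq.2.
  move=> pq X.
  have -> : X - f X = \sum_i \sum_j X i j *: (delta_mx i j - f (delta_mx i j)).
    rewrite {1 2}[X]matrix_sum_delta linear_sum /= -sumrB.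
    apply: eq_bigr => i _; rewrite linear_sum /= -sumrB.
    by apply: eq_bigr => j _; rewrite linearZ /= scalerBr.
  rewrite summxE; apply: eq_bigr => i _; rewrite summxE; apply: eq_bigr => j _.
  by rewrite !mxE mulrC.
exists [seq c pq | pq <- enum {: 'I_t * 'I_t}] => X; split.
  move=> /HU XU c0 /mapP [pq _ ->]; rewrite key /f projv_id // subrr mxE //.
move=> H; apply/HU.
have E : X - f X = 0.
  apply/matrixP => p q; have := key (p, q) X; rewrite /= => <-; rewrite mxE; apply: H.
  by apply/mapP; exists (p, q) => //; rewrite mem_enum.
have -> : X = f X by apply/eqP; rewrite -subr_eq0 E.
exact: memv_proj.
Qed.
End Eqns.

Section Main.
Variables (k : fieldType) (t : nat) (G : 'M[k]_t -> Prop).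
Hypothesis HG : basic_alg G.

Lemma G1 : G 1%:M. Proof. by case: HG => [[]]. Qed.
Lemma G0 : G 0. Proof. by case: HG => [[]]. Qed.
Lemma GD A B : G A -> G B -> G (A + B). Proof. by case: HG => [[_ _ H _ _] _ _]; apply: H. Qed.
Lemma GZ a A : G A -> G (a *: A). Proof. by case: HG => [[_ _ _ H _] _ _]; apply: H. Qed.
Lemma GM A B : G A -> G B -> G (A *m B). Proof. by case: HG => [[_ _ _ _ H] _ _]; apply: H. Qed.
Lemma Gup A : G A -> upper_tri A. Proof. by case: HG => _ H _; apply: H. Qed.
Lemma Gdp A : G A -> G (diag_part A). Proof. by case: HG => _ _ H; apply: H. Qed.
Lemma GB A B : G A -> G B -> G (A - B).
Proof. by move=> ? ?; rewrite -scaleN1r; apply: GD => //; apply: GZ. Qed.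
Lemma Gsum (I : finType) (P : pred I) (F : I -> 'M[k]_t) :
  (forall i, P i -> G (F i)) -> G (\sum_(i | P i) F i).
Proof. move=> H; apply: big_ind => //; [exact: G0 | exact: GD]. Qed.

Definition simP (i j : 'I_t) := forall A, G A -> A i i = A j j.
Definition sim (i j : 'I_t) : bool :=
  if excluded_middle_informative (simP i j) then true else false.
Lemma simE i j : reflect (simP i j) (sim i j).
Proof. by rewrite /sim; case: excluded_middle_informative => h; constructor. Qed.
Lemma sim_refl i : sim i i. Proof. by apply/simE. Qed.
Lemma sim_sym i j : sim i j -> sim j i.
Proof. by move=> /simE H; apply/simE => A GA; rewrite H. Qed.
Lemma sim_trans i j l : sim i j -> sim j l -> sim i l.
Proof. by move=> /simE H1 /simE H2; apply/simE => A GA; rewrite H1 ?H2. Qed.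

Lemma sim_sym_eq i j : sim i j = sim j i.
Proof. by apply/idP/idP; apply: sim_sym. Qed.

Lemma eclassE i j : (eclass sim i == eclass sim j) = sim i j.
Proof.
apply/eqP/idP => [E|H].
  have : j \in eclass sim j by rewrite inE sim_refl.
  by rewrite -E inE.
apply/setP => l; rewrite !inE; apply/idP/idP => H'.
  exact: sim_trans (sim_sym H) H'.
exact: sim_trans H H'.
Qed.

Definition Cl : {set {set 'I_t}} := [set eclass sim i | i : 'I_t].
Definition r := #|Cl|.
Definition Sa (a : 'I_r) : {set 'I_t} := enum_val a.

Lemma Sa_in a : exists i, Sa a = eclass sim i.
Proof. have /imsetP [i _ ->] : Sa a \in Cl by exact: enum_valP. by exists i. Qed.

Lemma cls_ex : exists cls : 'I_t -> 'I_r, forall p, Sa (cls p) = eclass sim p.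
Proof.
apply: (@fin_all_exists _ (fun _ => 'I_r) (fun p a => Sa a = eclass sim p)) => p.
have Hp : eclass sim p \in Cl by apply: imset_f.
by exists (enum_rank_in Hp (eclass sim p)); rewrite /Sa enum_rankK_in.
Qed.

Definition cls := proj1_sig (constructive_indefinite_description _ cls_ex).
Lemma clsP p : Sa (cls p) = eclass sim p.
Proof. exact: (proj2_sig (constructive_indefinite_description _ cls_ex)). Qed.

Lemma memS p a : (p \in Sa a) = (cls p == a).
Proof.
apply/idP/eqP => [H|<-]; last by rewrite clsP inE sim_refl.
apply: enum_val_inj; rewrite -/(Sa _) -/(Sa _) clsP.
have [i Ei] := Sa_in a; rewrite Ei; apply/eqP; rewrite eq_sym eclassE.
by move: H; rewrite Ei inE.
Qed.

Lemma cls_eq p q : (cls p == cls q) = sim p q.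
Proof. by rewrite -memS clsP inE sim_sym_eq. Qed.

Lemma ind_seq i (s : seq 'I_t) : (forall j, j \in s -> ~~ sim i j) ->
  exists A, [/\ G A, diagonal A, A i i = 1 & forall j, j \in s -> A j j = 0].
Proof.
elim: s => [|j s IH] Hs.
  exists 1%:M; split => //; [exact: G1 | by move=> p q /negbTE H; rewrite mxE H | by rewrite mxE eqxx].
have [A [GA dA Aii As]] : exists A, [/\ G A, diagonal A, A i i = 1 &
    forall j, j \in s -> A j j = 0].
  by apply: IH => j' H; apply: Hs; rewrite in_cons H orbT.
have : ~ simP i j by move=> /simE; apply/negP; apply: Hs; rewrite in_cons eqxx.
move=> /not_all_ex_not [B] HB; have [GB Bne] := imply_to_and _ _ HB.
pose Cm := (B i i - B j j)^-1 *: (diag_part B + (- B j j) *: 1%:M).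
have GC : G Cm by apply: GZ; apply: GD; [exact: Gdp | apply: GZ; exact: G1].
have Cll l : Cm l l = (B i i - B j j)^-1 * (B l l - B j j).
  by rewrite !mxE eqxx mulr1.
have dC : diagonal Cm by move=> p q /negbTE H; rewrite !mxE H mulr0 add0r mulr0.
have ne : B i i - B j j != 0 by rewrite subr_eq0; apply/eqP.
exists (Cm *m A); split.
- exact: GM.
- by move=> p q H; rewrite mul_diagl // dA // mulr0.
- by rewrite mul_diagl // Cll Aii mulr1 mulVf.
- move=> l; rewrite in_cons => /orP [/eqP ->|ls].
    by rewrite mul_diagl // Cll subrr mulr0 mul0r.
  by rewrite mul_diagl // As // mulr0.
Qed.

Lemma ind_in i : G (Ind (eclass sim i)).
Proof.
have [A [GA dA Aii As]] : exists A, [/\ G A, diagonal A, A i i = 1 &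
    forall j, j \in enum [set j | ~~ sim i j] -> A j j = 0].
  by apply: ind_seq => j; rewrite mem_enum inE.
suff -> : Ind (eclass sim i) = A by [].
apply/matrixP => p q; rewrite mxE.
case: (eqVneq p q) => [<-|npq] /=; last by rewrite dA.
rewrite inE; case: (boolP (sim i p)) => H.
  by move/simE: H => H; rewrite -H.
by rewrite As // mem_enum inE H.
Qed.

Definition E (a : 'I_r) : 'M[k]_t := Ind (Sa a).

Lemma E_entry a p q : E a p q = ((p == q) && (cls p == a))%:R.
Proof. by rewrite mxE memS. Qed.

Lemma EinG a : G (E a).
Proof. by rewrite /E; have [i ->] := Sa_in a; exact: ind_in. Qed.

Lemma E_diag a : diagonal (E a).
Proof. by move=> p q /negbTE H; rewrite E_entry H. Qed.

Lemma rep_ex : exists rep : 'I_r -> 'I_t, forall a, cls (rep a) = a.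
Proof.
apply: (@fin_all_exists _ (fun _ => 'I_t) (fun a p => cls p = a)) => a.
have [i Ei] := Sa_in a; exists i; apply/eqP; rewrite -memS Ei inE sim_refl //.
Qed.

Lemma sum_cls (F : 'I_r -> k) p : \sum_a F a * (cls p == a)%:R = F (cls p).
Proof.
rewrite (bigD1 (cls p)) //= eqxx mulr1 big1 ?addr0 // => a /negbTE H.
by rewrite eq_sym H mulr0.
Qed.

Lemma sum_cls1 (F : 'I_r -> 'M[k]_t) p q :
  (forall a, a != cls p -> F a p q = 0) -> (\sum_a F a) p q = F (cls p) p q.
Proof.
move=> H; rewrite summxE (bigD1 (cls p)) //= big1 ?addr0 // => a; exact: H.
Qed.

Lemma sum_cls1c (F : 'I_r -> 'M[k]_t) p q :
  (forall a, a != cls q -> F a p q = 0) -> (\sum_a F a) p q = F (cls q) p q.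
Proof.
move=> H; rewrite summxE (bigD1 (cls q)) //= big1 ?addr0 // => a; exact: H.
Qed.

Lemma sumE : \sum_a E a = 1%:M.
Proof.
apply/matrixP => p q; rewrite summxE mxE.
under eq_bigr => a _ do rewrite E_entry -mulnb natrM.
by rewrite sum_cls.
Qed.

Lemma EXE_entry a b (X : 'M[k]_t) p q :
  (E a *m X *m E b) p q = (cls p == a)%:R * X p q * (cls q == b)%:R.
Proof. by rewrite mulIndr mulIndl !memS. Qed.

Lemma sum_EXE (X : 'M[k]_t) : \sum_a \sum_b (E a *m X *m E b) = X.
Proof.
transitivity ((\sum_a E a) *m X *m (\sum_b E b)); last by rewrite sumE mul1mx mulmx1.
by rewrite !mulmx_suml; apply: eq_bigr => a _; rewrite mulmx_sumr.
Qed.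

Definition rep := proj1_sig (constructive_indefinite_description _ rep_ex).
Lemma repP a : cls (rep a) = a.
Proof. exact: (proj2_sig (constructive_indefinite_description _ rep_ex)). Qed.

Lemma dp_decomp (S : 'M[k]_t) : (forall i j, cls i = cls j -> S i i = S j j) ->
  diag_part S = \sum_a S (rep a) (rep a) *: E a.
Proof.
move=> H; apply/matrixP => p q; rewrite summxE mxE.
under eq_bigr => a _ do rewrite mxE E_entry -mulnb natrM mulrA.
rewrite sum_cls; case: (eqVneq p q) => [<-|npq]; last by rewrite mulr0.
by rewrite mulr1; apply: H; rewrite repP.
Qed.

Lemma G_const S : G S -> forall i j, cls i = cls j -> S i i = S j j.
Proof. by move=> GS i j /eqP; rewrite cls_eq => /simE; apply. Qed.

Lemma class_E a : class_of_basis E a = Sa a.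
Proof. by apply/setP => p; rewrite !inE E_entry eqxx /= natr_eq1 memS. Qed.

Lemma rel_E i j : rel_of_basis E i j = (cls i == cls j).
Proof.
rewrite /rel_of_basis; apply/existsP/eqP => [[a]|e].
  by rewrite !E_entry !eqxx /= !natr_eq1 => /andP [/eqP e1 /eqP e2]; rewrite e1 e2.
by exists (cls j); rewrite !E_entry !eqxx /= !natr_eq1 e eqxx.
Qed.

Lemma eclass_rel i : eclass (rel_of_basis E) i = Sa (cls i).
Proof. by apply/setP => p; rewrite !inE rel_E memS eq_sym. Qed.

Definition WIJ (I J : {set 'I_t}) (X : 'M[k]_t) :=
  exists Y, radR G Y /\ X = Ind I *m Y *m Ind J.

Lemma WIJ0 I J : WIJ I J 0.
Proof.
exists 0; split; last by rewrite mulmx0 mul0mx.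
by split; [exact: G0 | move=> i; rewrite mxE].
Qed.

Lemma WIJD I J A B : WIJ I J A -> WIJ I J B -> WIJ I J (A + B).
Proof.
move=> [Y [[GY dY] ->]] [Z [[GZ' dZ] ->]]; exists (Y + Z); split.
  by split; [exact: GD | move=> i; rewrite mxE dY dZ addr0].
by rewrite mulmxDr mulmxDl.
Qed.

Lemma WIJZ I J (c : k) A : WIJ I J A -> WIJ I J (c *: A).
Proof.
move=> [Y [[GY dY] ->]]; exists (c *: Y); split.
  by split; [exact: GZ | move=> i; rewrite mxE dY mulr0].
by rewrite scalemxAl scalemxAr.
Qed.

Definition sys (I J : {set 'I_t}) : seq 'M[k]_t :=
  proj1_sig (constructive_indefinite_description _
     (W_eqns (WIJ0 I J) (@WIJD I J) (@WIJZ I J))).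

Lemma sysP I J X : WIJ I J X <->
  (forall c, c \in sys I J -> \sum_i \sum_j c i j * X i j = 0).
Proof.
exact: (proj2_sig (constructive_indefinite_description _
     (W_eqns (WIJ0 I J) (@WIJD I J) (@WIJZ I J)))).
Qed.

Lemma supp (Y : 'M[k]_t) (I J : {set 'I_t}) (p q : 'I_t) : upper_tri Y -> (forall i, Y i i = 0) ->
  ~ [&& p \in I, q \in J & (p < q)%N] -> (Ind I *m Y *m Ind J) p q = 0.
Proof.
move=> uY dY H; rewrite mulIndr mulIndl.
case pI: (p \in I); last by rewrite !mul0r.
case qJ: (q \in J); last by rewrite mulr0.
have : ~~ (p < q)%N by apply/negP => h; apply: H; rewrite pI qJ h.
rewrite -leqNgt leq_eqVlt => /orP [/eqP e|lt].
  have qp : q = p by apply: val_inj.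
  by rewrite qp dY mulr0 mul0r.
by rewrite uY // mulr0 mul0r.
Qed.

Lemma WIJ_sys (I J : {set 'I_t}) (X : 'M[k]_t) : WIJ I J X ->
  (forall i j, ~ [&& i \in I, j \in J & (i < j)%N] -> X i j = 0) /\
  sys_holds (sys I J) I J X.
Proof.
move=> HW; have [Y [[GY dY] EX]] := HW.
have HS : forall i j, ~ [&& i \in I, j \in J & (i < j)%N] -> X i j = 0.
  by move=> i j H; rewrite EX; apply: supp => //; apply: Gup.
split => // c cin; rewrite block_sum; first exact: (proj1 (sysP I J X) HW).
by move=> i j /negP; apply: HS.
Qed.

Lemma sys_WIJ (I J : {set 'I_t}) (X : 'M[k]_t) :
  (forall i j, ~ [&& i \in I, j \in J & (i < j)%N] -> X i j = 0) ->
  sys_holds (sys I J) I J X -> WIJ I J X.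
Proof.
move=> HS Hs; apply/(sysP I J X) => c cin; rewrite -(@block_sum _ _ c X I J); first exact: Hs.
by move=> i j /negP; apply: HS.
Qed.

Lemma radR_off A : G A -> radR G (A - diag_part A).
Proof. by move=> GA; split; [apply: GB => //; apply: Gdp | move=> i; rewrite !mxE eqxx subrr]. Qed.

Lemma gbE : good_basis G E.
Proof.
split.
- by move=> a; split; [exact: EinG | exact: E_diag].
- move=> c H a; have := congr1 (fun M : 'M[k]_t => M (rep a) (rep a)) H; rewrite /= summxE mxE.
  under eq_bigr => a' _ do rewrite mxE E_entry eqxx /=.
  by rewrite sum_cls repP.
- move=> A [GA dA]; exists (fun a => A (rep a) (rep a)).
  by rewrite -{1}(dp_id dA) (dp_decomp (G_const GA)).
- by move=> a i j; rewrite E_entry; case: (_ && _); [right|left].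
split.
- exact: sumE.
- move=> a b ab; apply/matrixP => p q; rewrite (mul_diagl _ _ _ (E_diag _)) !E_entry eqxx /= mxE.
  case: (eqVneq (cls p) a) => [e|ne]; last by rewrite mul0r.
  by rewrite e eq_sym (negbTE ab) andbF mulr0.
- move=> a; apply/matrixP => p q; rewrite (mul_diagl _ _ _ (E_diag _)) !E_entry eqxx /=.
  by case: (cls p == a); rewrite ?mul0r ?mul1r ?andbF.
Qed.

Lemma ddE : direct_decomp G E.
Proof.
have dd3 : forall a b Y, ERE G E a b Y -> radR G Y.
  move=> a b Y [X [[GX dX] ->]]; split.
    by apply: GM; [apply: GM => //|]; exact: EinG.
  by move=> i; rewrite EXE_entry dX mulr0 mul0r.
split.
- move=> A GA; exists (diag_part A), (A - diag_part A); split.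
  + by split; [exact: Gdp | exact: dp_diag].
  + exact: radR_off.
  + by rewrite addrC subrK.
- move=> D0 R0 [_ dD] [_ dR] E0; split; apply/matrixP => p q;
    have := congr1 (fun M : 'M[k]_t => M p q) E0; rewrite /= !mxE;
    case: (eqVneq p q) => [<-|npq].
  + by rewrite dR addr0.
  + by rewrite dD.
  + by rewrite dR.
  + by move=> <-; rewrite dD // add0r.
- exact: dd3.
- move=> A GA; exists (fun a => A (rep a) (rep a)),
    (fun a b => E a *m (A - diag_part A) *m E b); split.
    by move=> a b; exists (A - diag_part A); split => //; exact: radR_off.
  by rewrite sum_EXE -(dp_decomp (G_const GA)) addrC subrK.
- move=> c Y HY H0.
  have Ypp : forall a b p, Y a b p p = 0 by move=> a b p; have [] := dd3 _ _ _ (HY a b).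
  have Yoff : forall a b p q, ~~ ((cls p == a) && (cls q == b)) -> Y a b p q = 0.
    move=> a b p q h; have [X [_ ->]] := HY a b; rewrite EXE_entry.
    by case: (cls p == a) h => /=; [move/negbTE => -> ; rewrite mulr0 | rewrite !mul0r].
  have hc : forall a, c a = 0.
    move=> a; have := congr1 (fun M : 'M[k]_t => M (rep a) (rep a)) H0; rewrite /= mxE summxE.
    rewrite [X in _ + X = _]summxE [X in _ + X = _]big1 => [|a' _]; last first.
      by rewrite summxE big1 // => b' _; exact: Ypp.
    rewrite addr0; under eq_bigr => a' _ do rewrite mxE E_entry eqxx /=.
    by rewrite sum_cls repP mxE.
  split => //.
  have H1 : \sum_a \sum_b Y a b = 0.
    have h0 : \sum_a c a *: E a = 0 by apply: big1 => a _; rewrite hc scale0r.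
    by rewrite -[RHS]H0 h0 add0r.
  move=> a b; apply/matrixP => p q.
  case: (boolP ((cls p == a) && (cls q == b))) => [/andP [/eqP ea /eqP eb]|h]; last first.
    by rewrite Yoff // mxE.
  have := congr1 (fun M : 'M[k]_t => M p q) H1; rewrite /= (@sum_cls1 _ p q); last first.
    move=> a' ne; rewrite summxE big1 // => b' _; apply: Yoff.
    by rewrite eq_sym (negbTE ne).
  rewrite (@sum_cls1c _ p q) ?ea ?eb //.
  by move=> b' ne; apply: Yoff; rewrite eb [b == b']eq_sym (negbTE ne) andbF.
Qed.

Lemma off_up (S : 'M[k]_t) : upper_tri S -> upper_tri (S - diag_part S).
Proof.
move=> uS i j ji; rewrite !mxE uS //.
have -> : (i == j) = false by apply/eqP => e; move: ji; rewrite e ltnn.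
by rewrite oppr0 addr0.
Qed.

Lemma off_block (S : 'M[k]_t) a b p q : p \in Sa a -> q \in Sa b -> (p < q)%N ->
  (E a *m (S - diag_part S) *m E b) p q = S p q.
Proof.
move=> pa qb pq; rewrite EXE_entry -!memS pa qb mul1r mulr1 !mxE.
have -> : (p == q) = false by apply/eqP => e; move: pq; rewrite e ltnn.
by rewrite oppr0 addr0.
Qed.

Lemma G_reduced (S : 'M[k]_t) : G S <-> reduced_by (rel_of_basis E) sys S.
Proof.
split.
  move=> GS; split; first exact: Gup.
    by move=> i j; rewrite rel_E => /eqP; apply: G_const.
  move=> i j; rewrite !eclass_rel.
  have WX : WIJ (Sa (cls i)) (Sa (cls j)) (E (cls i) *m (S - diag_part S) *m E (cls j)).
    by exists (S - diag_part S); split => //; exact: radR_off.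
  have [_ Hs] := WIJ_sys WX.
  by apply: sys_ext Hs => p q pa qb pq; apply: off_block.
move=> [uS cS sS].
have const : forall i j, cls i = cls j -> S i i = S j j.
  by move=> i j e; apply: cS; rewrite rel_E e.
have -> : S = diag_part S + \sum_a \sum_b (E a *m (S - diag_part S) *m E b).
  by rewrite sum_EXE addrC subrK.
apply: GD.
  by rewrite (dp_decomp const); apply: Gsum => a _; apply: GZ; exact: EinG.
apply: Gsum => a _; apply: Gsum => b _.
have WX : WIJ (Sa a) (Sa b) (E a *m (S - diag_part S) *m E b).
  apply: sys_WIJ.
    move=> p q H; apply: supp => //; first exact: off_up.
    by move=> i; rewrite !mxE eqxx subrr.
  have := sS (rep a) (rep b); rewrite !eclass_rel !repP.
  by apply: sys_ext => p q pa qb pq; rewrite off_block.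
move: WX => [Y [[GY _] ->]].
by apply: GM; [apply: GM => //|]; exact: EinG.
Qed.

Lemma ERE_iff a b (X : 'M[k]_t) :
  ERE G E a b X <->
  ((forall i j, ~ [&& i \in class_of_basis E a, j \in class_of_basis E b & (i < j)%N] ->
      X i j = 0) /\
   sys_holds (sys (class_of_basis E a) (class_of_basis E b))
             (class_of_basis E a) (class_of_basis E b) X).
Proof.
rewrite !class_E; split; first exact: WIJ_sys.
by move=> [H1 H2]; exact: sys_WIJ.
Qed.

Lemma rel_equiv : is_equiv_rel (rel_of_basis E).
Proof.
split=> [i|i j|i j l]; rewrite ?rel_E //.
  by rewrite eq_sym.
by move=> /eqP -> /eqP ->.
Qed.

Lemma classes_part :
  [/\ (forall a, E a = \sum_(i in class_of_basis E a) delta_mx i i),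
      (forall a, exists i, i \in class_of_basis E a) &
      (forall i, exists a, eclass (rel_of_basis E) i = class_of_basis E a)].
Proof.
split.
- by move=> a; rewrite class_E /E Ind_delta.
- by move=> a; exists (rep a); rewrite class_E memS repP.
- by move=> i; exists (cls i); rewrite eclass_rel class_E.
Qed.

Lemma basic_red : reduced_alg G.
Proof.
split; first by case: HG.
exists (rel_of_basis E), sys; split; [exact: rel_equiv | exact: G_reduced].
Qed.
End Main.

Lemma red_basic (k : fieldType) (t : nat) (G : 'M[k]_t -> Prop) :
  reduced_alg G -> basic_alg G.
Proof.
move=> [HS [e [sys [_ He]]]]; split => //.
  by move=> A /He [].
move=> A /He [uA cA sA]; apply/He; split.
- by move=> i j ji; rewrite mxE; case: eqP => // ee; move: ji; rewrite ee ltnn.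
- by move=> i j eij; rewrite !mxE !eqxx; apply: cA.
- move=> i j c cin; apply: big1 => p _; apply: big1 => q /andP [_ pq].
  rewrite mxE; case: eqP => [ee|_]; last by rewrite mulr0.
  by move: pq; rewrite ee ltnn.
Qed.

Theorem lemma2p1 (k : closedFieldType) (t : nat) :
  (forall G : 'M[k]_t -> Prop, basic_alg G ->
     exists (r : nat) (E : 'I_r -> 'M[k]_t),
       [/\ good_basis G E, direct_decomp G E,
           [/\ (forall a, E a = \sum_(i in class_of_basis E a) delta_mx i i),
               (forall a, exists i, i \in class_of_basis E a) &
               (forall i, exists a, eclass (rel_of_basis E) i = class_of_basis E a)] &
           exists sys : {set 'I_t} -> {set 'I_t} -> seq 'M[k]_t,
             [/\ is_equiv_rel (rel_of_basis E),
                 (forall S, G S <-> reduced_by (rel_of_basis E) sys S) &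
                 (forall a b (X : 'M[k]_t),
                    ERE G E a b X <->
                    ((forall i j, ~ [&& i \in class_of_basis E a,
                                        j \in class_of_basis E b & (i < j)%N] ->
                                   X i j = 0) /\
                     sys_holds (sys (class_of_basis E a) (class_of_basis E b))
                               (class_of_basis E a) (class_of_basis E b) X))]]) /\
  (forall G : 'M[k]_t -> Prop, basic_alg G <-> reduced_alg G).
Proof.
split.
  move=> G HG; exists (r G), (@E k t G); split.
  - exact: gbE.
  - exact: ddE.
  - exact: classes_part.
  - exists (@sys k t G HG); split.
    + exact: rel_equiv.
    + move=> S; exact: G_reduced.
    + move=> a b X; exact: ERE_iff.
move=> G; split; [exact: basic_red | exact: red_basic].
Qed.
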